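(* Let $X_1,\dots,X_n\in\mathbb{R}$ and $1\le k\le n$. Let $\mathcal{I}\subseteq\{1,\dots,n\}$ with $|\mathcal{I}|=k$ be any subset minimizing the sum of squared deviations $\sum_{i\in\mathcal{I}}X_i^2-\frac{1}{k}\left(\sum_{i\in\mathcal{I}}X_i\right)^2$ over all $k$-subsets, and let $\mathcal{O}=\{1,\dots,n\}\setminus\mathcal{I}$. Then $\mathcal{I}$ and $\mathcal{O}$ are quadratically separable: there exist $w\in\mathbb{R}^2\setminus\{0\}$ and $b\in\mathbb{R}$ such that $w^\top(X_i^2,X_i)\le b$ for all $i\in\mathcal{I}$ and $w^\top(X_o^2,X_o)\ge b$ for all $o\in\mathcal{O}$.
   Context: Quadratic separability means linear separability of the two point sets after lifting each real number $x$ to $\mathcal{L}_2(x)=(x^2,x)\in\mathbb{R}^2$; two point sets $A,B\subseteq\mathbb{R}^2$ are linearly separable if there are $w\in\mathbb{R}^2$ and $b\in\mathbb{R}$ with $w^\top a\ge b$ for all $a\in A$ and $w^\top p\le b$ for all $p\in B$. *)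

(* Defs.v *)
From mathcomp Require Import all_boot all_order all_algebra.
Set Implicit Arguments. Unset Strict Implicit. Unset Printing Implicit Defensive.
Import Order.TTheory GRing.Theory Num.Theory.
Local Open Scope ring_scope.

Definition ssd (R : realFieldType) (n k : nat) (X : 'I_n -> R) (S : {set 'I_n}) : R :=
  \sum_(i in S) X i ^+ 2 - (k%:R)^-1 * (\sum_(i in S) X i) ^+ 2.

Definition lift2_dot (R : realFieldType) (w1 w2 x : R) : R := w1 * x ^+ 2 + w2 * x.

(* Main.v *)
Require Import Defs.
From mathcomp Require Import all_boot all_order all_algebra.
From mathcomp Require Import ring lra.
Import Order.TTheory GRing.Theory Num.Theory.
Local Open Scope ring_scope.

Theorem theorem3 (R : realFieldType) (n k : nat) (X : 'I_n -> R) (I : {set 'I_n}) :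
  (1 <= k)%N -> (k <= n)%N -> #|I| = k ->
  (forall J : {set 'I_n}, #|J| = k -> ssd k X I <= ssd k X J) ->
  exists w1 w2 b : R, (w1 != 0 \/ w2 != 0) /\
    (forall i, i \in I -> lift2_dot w1 w2 (X i) <= b) /\
    (forall o, o \in ~: I -> b <= lift2_dot w1 w2 (X o)).
Proof.
move=> k1 kn cI Hmin.
set t := (k%:R : R)^-1.
have t0 : 0 <= t by rewrite invr_ge0 ler0n.
set T := \sum_(x in I) X x.
set Q := \sum_(x in I) X x ^+ 2.
set f := fun x : R => lift2_dot 1 (- (2 * (T * t))) x.
have key : forall i o, i \in I -> o \notin I -> f (X i) <= f (X o).
  move=> i o iI oI.
  have oD : o \notin I :\ i by rewrite in_setD1 (negbTE oI) andbF.
  have cJ : #|o |: (I :\ i)| = k.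
    move: cI; rewrite cardsU1 oD (cardsD1 i I) iI => <-; by [].
  have := Hmin _ cJ.
  rewrite /ssd !big_setU1 //= -/t.
  have e1 : T = X i + \sum_(x in I :\ i) X x by rewrite /T (big_setD1 i iI).
  have e2 : Q = X i ^+ 2 + \sum_(x in I :\ i) X x ^+ 2 by rewrite /Q (big_setD1 i iI).
  rewrite -/T -/Q e1 e2.
  have h2 : 0 <= t * (X o - X i) ^+ 2 by rewrite mulr_ge0 // sqr_ge0.
  move: h2; rewrite /f /lift2_dot e1.
  move: (\sum_(x in I :\ i) X x) (\sum_(x in I :\ i) X x ^+ 2) => U V.
  move=> h2 H; nra.
have [i0 i0I] : exists i0, i0 \in I.
  apply/set0Pn; rewrite -card_gt0 cI; exact: k1.
case: (arg_maxP (fun i => f (X i)) i0I) => im imI Hm.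
exists 1, (- (2 * (T * t))), (f (X im)); split; first by left; rewrite oner_eq0.
split.
  by move=> i iI; exact: Hm.
by move=> o; rewrite in_setC => oI; apply: key.
Qed.
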